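(* For every positive integer $n$, \[ \sum_{j=1}^{n}\left(\binom{n}{j}-1\right)\frac{B_j}{j}\left(1-2^{-j}\right)=\frac{1-2^{n-1}}{2^n}. \]
   Context: $B_j$ is the $j$th Bernoulli number ($\frac{t}{e^t-1}=\sum_{m\ge0}B_m\frac{t^m}{m!}$, so $B_1=-1/2$). *)

(* Defs.v *)
From mathcomp Require Import all_boot all_order all_algebra.
Set Implicit Arguments. Unset Strict Implicit. Unset Printing Implicit Defensive.
Import Order.TTheory GRing.Theory Num.Theory.
Local Open Scope ring_scope.

(* Bernoulli numbers B_m (rational), convention B_1 = -1/2, i.e.
   t/(e^t-1) = sum_m B_m t^m/m!.  Equivalently (coefficient comparison in
   (e^t - 1) * sum B_m t^m/m! = t):  B_0 = 1 and for m >= 1,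
   sum_{k=0}^{m} C(m+1,k) B_k = 0, i.e.
   B_m = -(1/(m+1)) * sum_{k<m} C(m+1,k) B_k. *)

Fixpoint bern_list (m : nat) : seq rat :=
  match m with
  | 0 => [:: 1]
  | m'.+1 =>
      let s := bern_list m' in
      rcons s (- (m'.+2%:R)^-1 *
               \sum_(k < m'.+1) ('C(m'.+2, k))%:R * nth 0 s k)
  end.

Definition bernoulli (m : nat) : rat := nth 0 (bern_list m) m.

(* Main.v *)
Require Import Defs.
From mathcomp Require Import all_boot all_order all_algebra.
From mathcomp Require Import ring lra.
Import Order.TTheory GRing.Theory Num.Theory.
Local Open Scope ring_scope.

Lemma size_bern m : size (bern_list m) = m.+1.
Proof. by elim: m => //= m IH; rewrite size_rcons IH. Qed.

Lemma nth_bern m k : (k <= m)%N -> nth 0 (bern_list m) k = bernoulli k.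
Proof.
elim: m => [|m IH]; first by rewrite leqn0 => /eqP ->.
rewrite leq_eqVlt => /orP [/eqP -> //|]; rewrite ltnS => hk.
by rewrite /= nth_rcons size_bern ltnS hk IH.
Qed.

Lemma bernS m : bernoulli m.+1 =
  - (m.+2%:R)^-1 * \sum_(k < m.+1) ('C(m.+2, k))%:R * bernoulli k.
Proof.
rewrite {1}/bernoulli /= nth_rcons size_bern ltnn eqxx.
congr (_ * _); apply: eq_bigr => k _; rewrite nth_bern //.
by rewrite -ltnS.
Qed.

Lemma bern_rec m : \sum_(k < m.+2) ('C(m.+2, k))%:R * bernoulli k = 0.
Proof.
rewrite big_ord_recr /= binSn bernS.
set S := \sum_(_ < _) _.
have h : (m.+2%:R : rat) != 0 by rewrite pnatr_eq0.
by rewrite mulrA mulrN divff // mulN1r subrr.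
Qed.

Lemma bern0 : bernoulli 0 = 1. Proof. by []. Qed.
Lemma bern1 : bernoulli 1 = - 2%:R^-1.
Proof. rewrite bernS big_ord1 bern0 /=. apply/eqP; by vm_compute. Qed.

Lemma bern_full m : \sum_(k < m.+1) ('C(m, k))%:R * bernoulli k
  = bernoulli m + (m == 1%N)%:R.
Proof.
case: m => [|[|m]].
- by rewrite big_ord1 bern0 addr0 mul1r.
- rewrite !big_ord_recr big_ord0 /= bern0 bern1. apply/eqP; by vm_compute.
- rewrite big_ord_recr /= bern_rec binn /=. by rewrite mul1r add0r addr0.
Qed.
Lemma binM n i j : (i + j <= n)%N ->
  ('C(n, i + j) * 'C(i + j, j) = 'C(n, j) * 'C(n - j, i))%N.
Proof.
move=> h.
have h1 : ('C(i + j, j) * (j`! * i`!))%N = (i + j)`!.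
  by have := @bin_fact (i + j) j (leq_addl _ _); rewrite addnK.
have h2 := @bin_fact n (i + j) h.
have hj : (j <= n)%N by apply: leq_trans h; apply: leq_addl.
have h4 := @bin_fact n j hj.
have hi : (i <= n - j)%N by rewrite leq_subRL // addnC.
have h3 := @bin_fact (n - j) i hi.

rewrite -subnDA [(j + i)%N]addnC in h3.

have hp : (0 < j`! * i`! * (n - (i + j))`!)%N by rewrite !muln_gt0 !fact_gt0.
apply/eqP; rewrite -(eqn_pmul2r hp).
apply/eqP; transitivity n`!.
  rewrite -h2 -h1; ring.
rewrite -h4 -h3; ring.
Qed.


Lemma pow2sum k : (\sum_(i < k.+1) 'C(k, i) = 2 ^ k)%N.
Proof.
have := expnDn 1 1 k; rewrite (_ : (1 + 1 = 2)%N) // => ->.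
by apply: eq_bigr => i _; rewrite !exp1n !muln1.
Qed.

Lemma Lsum n j : (j <= n)%N ->
  (\sum_(m < n.+1) 'C(n, m) * 'C(m, j) = 'C(n, j) * 2 ^ (n - j))%N.
Proof.
move=> hj.
rewrite -(big_mkord xpredT (fun m => 'C(n, m) * 'C(m, j))%N).
rewrite (big_cat_nat (n:=j) (leq0n j)) /=; last by rewrite ltnW.
rewrite big1_seq /=; last first.
  move=> m /=; rewrite mem_index_iota => /andP [_ hm].
  by rewrite (bin_small hm) muln0.
rewrite add0n -{1}[j]add0n big_addn -pow2sum big_distrr /= subSn // big_mkord.
apply: eq_bigr => i _; apply: binM.
by have := ltn_ord i; rewrite ltnS leq_subRL // addnC.
Qed.

Lemma trunc n m : (m < n)%N ->
  \sum_(j < n) ('C(m, j))%:R * bernoulli j =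
  \sum_(j < m.+1) ('C(m, j))%:R * bernoulli j :> rat.
Proof.
move=> hm; rewrite [RHS](big_ord_widen n (fun j => ('C(m, j))%:R * bernoulli j)) //.
rewrite [RHS]big_mkcond /=; apply: eq_bigr => j _.
case: ifP => // /negbT; rewrite -leqNgt => hj.
by rewrite bin_small // mul0r.
Qed.

Lemma key n : (1 < n)%N ->
  \sum_(j < n) ('C(n, j))%:R * bernoulli j * 2%:R ^+ (n - j) = n%:R :> rat.
Proof.
case: n => [|[|n]] // _.
transitivity (\sum_(j < n.+2) \sum_(m < n.+3)
   ('C(n.+2, m))%:R * (('C(m, j))%:R * bernoulli j) : rat).
  apply: eq_bigr => j _.
  have hj : (j <= n.+2)%N by apply: ltnW.
  rewrite -natrX -mulrA [X in _ * X]mulrC mulrA -natrM -Lsum // natr_sum mulr_suml.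
  by apply: eq_bigr => m _; rewrite natrM; ring.
rewrite exchange_big /= big_ord_recr /= -mulr_sumr bern_rec mulr0 addr0.
transitivity (\sum_(m < n.+2) ('C(n.+2, m))%:R * (bernoulli m + (nat_of_ord m == 1%N)%:R) : rat).
  apply: eq_bigr => m _; rewrite -mulr_sumr trunc // bern_full //.
rewrite (eq_bigr (fun m : 'I_n.+2 => ('C(n.+2, m))%:R * bernoulli m
   + ('C(n.+2, m))%:R * (nat_of_ord m == 1%N)%:R)); last by move=> m _; rewrite mulrDr.
rewrite big_split /= bern_rec add0r.
rewrite (bigD1 (Ordinal (isT : (1 < n.+2)%N))) //= big1 ?addr0 ?bin1 ?mulr1 //.
move=> m hm; have -> : (nat_of_ord m == 1%N) = false.
  by apply/negbTE; apply: contra hm => /eqP h; apply/eqP; apply: val_inj.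
by rewrite mulr0.
Qed.

Ltac side := repeat (apply/andP; split); lra.

Lemma natpos (n : nat) : (n.+1%:R : rat) != 0.
Proof. by rewrite pnatr_eq0. Qed.

Lemma second n :
  \sum_(1 <= j < n.+2) ('C(n.+1, j.-1))%:R *
     (bernoulli j / j%:R * (1 - (2%:R ^+ j)^-1))
  = - (2%:R ^+ n.+2)^-1 :> rat.
Proof.
have hn := natpos n.+1.
transitivity ((n.+2%:R)^-1 *
  \sum_(j < n.+2) ('C(n.+2, j))%:R * bernoulli j * (1 - (2%:R ^+ j)^-1) : rat).
  rewrite big_add1 /= big_mkord [X in _ = _ * X]big_ord_recl /= expr0 invr1 subrr mulr0 add0r.
  rewrite mulr_sumr; apply: eq_bigr => i _.
  have h := congr1 (fun k => k%:R : rat) (mul_bin_diag n.+2 i).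
  rewrite /= !natrM in h.
  have hi := natpos i.
  have -> : ('C(n.+2, i.+1))%:R = n.+2%:R * ('C(n.+1, i))%:R / i.+1%:R :> rat.
    by rewrite h mulrC mulKf.
  rewrite /bump /=. field.
  have := ler0n rat i; have := ler0n rat n; rewrite expf_eq0 pnatr_eq0 andbF /=; lra.
rewrite (eq_bigr (fun j : 'I_n.+2 => ('C(n.+2, j))%:R * bernoulli j
   - (2%:R ^+ n.+2)^-1 * (('C(n.+2, j))%:R * bernoulli j * 2%:R ^+ (n.+2 - j)))); last first.
  move=> j _; rewrite exprB ?unitfE ?pnatr_eq0 //; last by apply: ltnW.
  have h2 : (2%:R ^+ j : rat) != 0 by rewrite expf_eq0 pnatr_eq0 andbF.
  have h3 : (2%:R ^+ n.+2 : rat) != 0 by rewrite expf_eq0 pnatr_eq0 andbF.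
  field; by rewrite h2 h3.
rewrite sumrB bern_rec sub0r -mulr_sumr key //.
have h3 : (2%:R ^+ n.+2 : rat) != 0 by rewrite expf_eq0 pnatr_eq0 andbF.
field; rewrite h3 /=; have := ler0n rat n; lra.
Qed.

Lemma mainS n : \sum_(1 <= j < n.+2)
   (('C(n.+1, j))%:R - 1) * (bernoulli j / j%:R) * (1 - (2%:R ^+ j)^-1)
  = (1 - 2%:R ^+ n) / 2%:R ^+ n.+1 :> rat.
Proof.
elim: n => [|n IH].
  by rewrite big_nat1 binn subrr !mul0r.
rewrite (big_nat_recr (n.+2)) //= binn subrr !mul0r addr0.
rewrite (eq_big_nat _ _ (F2 := fun j =>
   (('C(n.+1, j))%:R - 1) * (bernoulli j / j%:R) * (1 - (2%:R ^+ j)^-1)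
   + ('C(n.+1, j.-1))%:R * (bernoulli j / j%:R * (1 - (2%:R ^+ j)^-1)))); last first.
  move=> [|j] //= _; rewrite binS natrD; ring.
rewrite big_split /= IH second.
have h3 : (2%:R ^+ n.+2 : rat) != 0 by rewrite expf_eq0 pnatr_eq0 andbF.
rewrite !exprS in h3 *.
field; by rewrite expf_eq0 pnatr_eq0 andbF.
Qed.

Theorem mainTheorem7 (n : nat) (hn : (0 < n)%N) :
  \sum_(1 <= j < n.+1)
     (('C(n, j))%:R - 1) * (bernoulli j / j%:R) * (1 - (2%:R ^+ j)^-1)
  = (1 - 2%:R ^+ n.-1) / 2%:R ^+ n :> rat.
Proof.
case: n hn => [|n] // _.
exact: mainS.
Qed.
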